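(* Let $f:\mathbb{R}^n\to\mathbb{R}$ be twice continuously differentiable, $x_0\in\mathbb{R}^n$, $S_f=\{x: f(x)\le f(x_0)\}$. Assume $\|\nabla f(x)-\nabla f(y)\|\le L_C\|x-y\|$ for all $x,y\in S_f$, and that there are constants $M\ge m>0$ with $M\|z\|^2\ge z^{T}\nabla^2 f(x)z\ge m\|z\|^2$ for all $x\in S_f$, $z\in\mathbb{R}^n$. Let $\{x_k\}$ and the time-stepping sizes $\{\Delta t_k\}$ be generated by the Eptctr algorithm described in the context. Then there exists a positive constant $\delta_{\Delta t}$ such that $\Delta t_k \ge \gamma_2\,\delta_{\Delta t}$ for all $k=1,2,\dots$.
   Context: Eptctr algorithm (explicit pseudo-transient continuation with trust-region updating and switching preconditioning). Parameters: $\eta_a=10^{-6}$, $\eta_1=0.25$, $\gamma_1=2$, $\eta_2=0.75$, $\gamma_2=0.5$, $\theta=10^{-6}$, initial $\Delta t_0=10^{-2}$, counter $K_{bad}=0$, $y_{-1}=s_{-1}=0$. Notation: $g_k=\nabla f(x_k)$, $B_k=\nabla^2 f(x_k)$. Initially $s_0^N$ solves $B_0 s_0^N=-g_0$. At iteration $k$: if the previous trial step was accepted (or $k=0$), compute the direction $s_k^N$ as follows: if $|s_{k-1}^{T}y_{k-1}|>\theta\|s_{k-1}\|^2$ and $K_{bad}<5$, set $s_k^N=-H_kg_k$ with $H_k = I - \frac{y_{k-1}s_{k-1}^{T}+s_{k-1}y_{k-1}^{T}}{y_{k-1}^{T}s_{k-1}} + 2\frac{\|y_{k-1}\|^2}{(y_{k-1}^{T}s_{k-1})^2}s_{k-1}s_{k-1}^{T}$;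 otherwise solve $B_k s_k^N=-g_k$. If the previous trial step was rejected, the previous direction is reused. Set $s_k=\frac{\Delta t_k}{1+\Delta t_k}s_k^N$ and compute $\rho_k=\frac{f(x_k)-f(x_k+s_k)}{m_k(0)-m_k(s_k)}$ with $m_k(s)=\frac{1+0.5\Delta t_k}{1+\Delta t_k}g_k^{T}s$. If $\rho_k\le\eta_a$ the step is rejected ($x_{k+1}=x_k$, and the pair $(s,y)$ used for $H$ is not changed); otherwise it is accepted: $x_{k+1}=x_k+s_k$, $y_k=g_{k+1}-g_k$, $s_k=x_{k+1}-x_k$. Time step update: if $|1-\rho_k|\ge\eta_2$ then $K_{bad}\leftarrow K_{bad}+1$ and $\Delta t_{k+1}=\gamma_2\Delta t_k$; else if $|1-\rho_k|\ge\eta_1$ then $\Delta t_{k+1}=\Delta t_k$; else $\Delta t_{k+1}=\gamma_1\Delta t_k$. The algorithm is considered as generating an infinite sequence (the stopping test $\|g_k\|\le\epsilon$ is not triggered). *)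

(* Defs.v *)
From HB Require Import structures.
From mathcomp Require Import all_boot all_order all_algebra.
From mathcomp Require Import all_classical all_reals all_analysis.
Set Implicit Arguments. Unset Strict Implicit. Unset Printing Implicit Defensive.
Import Order.TTheory GRing.Theory Num.Theory.
Import numFieldNormedType.Exports.
Local Open Scope ring_scope.

Section Eptctr.
Variables (R : realType) (n : nat).
Implicit Types (u v : 'cV[R]_n) (f : 'cV[R]_n -> R).

Definition dot u v : R := (u^T *m v) 0 0.
Definition nrm u : R := Num.sqrt (dot u u).

Definition evec (i : 'I_n) : 'cV[R]_n := delta_mx i 0.

Definition grad f (x : 'cV[R]_n) : 'cV[R]_n := \col_i ('D_(evec i) f x).
Definition hess f (x : 'cV[R]_n) : 'M[R]_n :=
  \matrix_(i, j) ('D_(evec j) (fun y => grad f y i 0) x).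

Definition C2 f : Prop :=
  (forall x, differentiable f x) /\ (forall x, differentiable (grad f) x) /\
  continuous (hess f).

Definition eta_a : R := 10 ^- 6.
Definition eta_1 : R := 1 / 4.
Definition gamma_1 : R := 2.
Definition eta_2 : R := 3 / 4.
Definition gamma_2 : R := 1 / 2.
Definition theta : R := 10 ^- 6.
Definition dt0 : R := 10 ^- 2.

Definition Hmat (s y : 'cV[R]_n) : 'M[R]_n :=
  1%:M - (dot y s)^-1 *: (y *m s^T + s *m y^T)
       + (2 * nrm y ^+ 2 / (dot y s) ^+ 2) *: (s *m s^T).

Record state := St {
  st_x   : 'cV[R]_n;
  st_dt  : R;
  st_kb  : nat;
  st_dir : 'cV[R]_n;   (* previous direction s^N (reused after rejection) *)
  st_s   : 'cV[R]_n;   (* last accepted step s (for H) *)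
  st_y   : 'cV[R]_n;   (* last accepted y (for H) *)
  st_acc : bool        (* previous trial step accepted (true initially, k=0) *)
}.

Definition init (x0 : 'cV[R]_n) : state := St x0 dt0 0 0 0 0 true.

Definition step f (st : state) : state :=
  let x := st_x st in let dt := st_dt st in let kb := st_kb st in
  let g := grad f x in
  let dir :=
    if st_acc st then
      (if (`|dot (st_s st) (st_y st)| > theta * nrm (st_s st) ^+ 2) && (kb < 5)%N
       then - (Hmat (st_s st) (st_y st) *m g)
       else - (invmx (hess f x) *m g))
    else st_dir st in
  let s := (dt / (1 + dt)) *: dir in
  let model (v : 'cV[R]_n) := (1 + dt / 2) / (1 + dt) * dot g v in
  let rho := (f x - f (x + s)) / (model 0 - model s) in
  let acc := rho > eta_a in
  let x' := if acc then x + s else x in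
  let s' := if acc then s else st_s st in
  let y' := if acc then grad f x' - g else st_y st in
  let kb' := if `|1 - rho| >= eta_2 then kb.+1 else kb in
  let dt' := if `|1 - rho| >= eta_2 then gamma_2 * dt
             else if `|1 - rho| >= eta_1 then dt else gamma_1 * dt in
  St x' dt' kb' dir s' y' acc.

Fixpoint eptctr f (x0 : 'cV[R]_n) (k : nat) : state :=
  match k with 0 => init x0 | k'.+1 => step f (eptctr f x0 k') end.

Definition xk f x0 k := st_x (eptctr f x0 k).
Definition dtk f x0 k := st_dt (eptctr f x0 k).

End Eptctr.

(* Main.v *)
Require Import Defs.
From HB Require Import structures.
From mathcomp Require Import all_boot all_order all_algebra.
From mathcomp Require Import all_classical all_reals all_analysis.
From mathcomp Require Import ring lra.
Import Order.TTheory GRing.Theory Num.Theory.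
Import numFieldNormedType.Exports.
Local Open Scope ring_scope.

Set Implicit Arguments. Unset Strict Implicit.

Section A.
Local Open Scope classical_set_scope.
Variable R : realType.

Lemma deriv_neg_right (k : R -> R) (t d : R) :
  is_derive t 1 k d -> d < 0 -> exists2 e : R, 0 < e & forall u, t < u -> u < t + e -> k u < k t.
Proof.
move=> [dk dv] dneg.
have cv : (fun h : R => h^-1 *: ((k \o shift t) (h *: 1) - k t)) @ 0^' --> d.
  by rewrite -dv; apply: dk.
have := @cvgr_lt R _ _ _ _ _ cv _ dneg.
rewrite near_withinE /= => H0. move: (H0 (dnbhs_filter _)) => /nbhs_ballP [e e0 He].
exists e => // u tu ute.
have hu : ball (0:R) e (u - t).
  rewrite /ball /= sub0r normrN gtr0_norm ?subr_gt0 //.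
  by rewrite ltrBlDl.
have := He _ hu; rewrite subr_eq0 gt_eqF //= => /(_ isT).
rewrite /shift /=.
have ut0 : 0 < u - t by rewrite subr_gt0.
rewrite (_ : (u-t)%:A = u - t); last by rewrite /GRing.scale /= mulr1.
rewrite subrK -[_ *: _]/(_ * _) pmulr_rlt0 ?invr_gt0 //.
by rewrite subr_lt0.
Qed.
End A.

Section B.
Local Open Scope classical_set_scope.
Variable R : realType.

Lemma mvt_bound (phi dphi : R -> R) (good : R -> Prop) (l t : R) :
  (forall u : R, is_derive u 1 phi (dphi u)) ->
  (forall u, 0 <= u -> good u -> `|dphi u - dphi 0| <= l * u) ->
  0 < t -> (forall u, 0 <= u < t -> good u) ->
  `|phi t - phi 0 - t * dphi 0| <= l * t ^+ 2.
Proof.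
move=> hd hl t0 hg.
have cont : continuous phi.
  move=> u; apply: differentiable_continuous; apply/derivable1_diffP.
  by case: (hd u).
have [c cin E] := @MVT R phi dphi 0 t t0 (fun u _ => hd u) (continuous_subspaceT cont).
move: cin; rewrite in_itv /= => /andP [c0 ct].
rewrite E subr0 mulrC -mulrBr normrM gtr0_norm //.
have := hl c (ltW c0) (hg c _); rewrite ?c0 ?(ltW c0) ?ct => /(_ isT) H.
rewrite expr2 mulrA [l * t]mulrC -mulrA ler_pM2l //.
apply: (le_trans H).
have l0 : 0 <= l.
  have := hl c (ltW c0) (hg c _); rewrite ?(ltW c0) ?ct => /(_ isT) H'.
  by rewrite -(pmulr_lge0 _ c0) (le_trans _ H').
by rewrite ler_wpM2l // ltW.
Qed.

Lemma segment (phi dphi : R -> R) (c0 q l : R) :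
  (forall u : R, is_derive u 1 phi (dphi u)) ->
  phi 0 <= c0 -> 0 < q -> dphi 0 = - q -> 0 <= l -> l <= q / 2 ->
  (forall u, 0 <= u -> phi u <= c0 -> `|dphi u - dphi 0| <= l * u) ->
  (forall t, 0 <= t <= 1 -> phi t <= c0) /\ `|phi 1 - phi 0 - dphi 0| <= l.
Proof.
move=> hd p0 q0 d0 l0 lq hl.
pose S := [set t : R | 0 <= t <= 1 /\ forall u, 0 <= u <= t -> phi u <= c0].
have S0 : S 0.
  split; first by rewrite lexx ler01.
  by move=> u /andP [u0 u0']; have -> : u = 0 by apply/le_anti; rewrite u0 u0'.
have hs : has_sup S.
  split; first by exists 0.
  by exists 1 => t [] /andP [].
pose ts := sup S.
have ts0 : 0 <= ts by apply: sup_upper_bound.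
have ts1 : ts <= 1 by apply: ge_sup; [exists 0 | move=> t [] /andP []].
have A : forall u, 0 <= u < ts -> phi u <= c0.
  move=> u /andP [u0 uts].
  have ep : 0 < ts - u by rewrite subr_gt0.
  have [e [_ He] lt] := sup_adherent ep hs.
  by apply: He; rewrite u0 /=; move: lt; rewrite opprB addrCA subrr addr0 => /ltW.
have B : forall t, 0 <= t <= ts -> phi t <= phi 0 - t * q / 2.
  move=> t /andP [t0 tts]; have [->|tpos] := eqVneq t 0.
    by rewrite mul0r mul0r subr0.
  have tp : 0 < t by rewrite lt_def tpos t0.
  have := @mvt_bound phi dphi (fun u => phi u <= c0) l t hd hl tp.
  have hh : forall u, 0 <= u < t -> phi u <= c0.
    move=> u /andP [u0 ut]; apply: A; rewrite u0 /=; exact: (lt_le_trans ut tts).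
  move=> /(_ hh); rewrite d0 => H.
  have t1 : t <= 1 := le_trans tts ts1.
  have H2 := le_trans (ler_norm _) H.
  have tt : t ^+ 2 <= t by rewrite expr2 ler_piMr.
  have lt2 : l * t ^+ 2 <= q / 2 * t.
    apply: (le_trans (ler_wpM2l l0 tt)); rewrite ler_wpM2r //.
  move: H2 lt2; rewrite expr2; nra.
have Sts : S ts.
  split; first by rewrite ts0 ts1.
  move=> u hu; apply: (le_trans (B u hu)); apply: (le_trans _ p0).
  case/andP: hu => u0 _; rewrite gerBl; apply: divr_ge0 => //; apply: mulr_ge0 => //; exact: ltW.
have ts_eq : ts = 1.
  apply/eqP; rewrite eq_le ts1 /=; rewrite leNgt; apply/negP => tslt.
  have gts : phi ts <= c0 by apply: Sts.2; rewrite ts0 lexx.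
  have hneg : dphi ts < 0.
    have := hl ts ts0 gts; rewrite d0 => /(le_trans (ler_norm _)) H.
    have : l * ts <= q / 2 by rewrite -[q / 2]mulr1; apply: ler_pM.
    move: H q0; nra.
  have [e e0 He] := @deriv_neg_right R phi ts (dphi ts) (hd ts) hneg.
  pose u' := Num.min (ts + e / 2) 1.
  have Su' : S u'.
    have u'0 : 0 <= u'.
      by rewrite /u' le_min ler01 andbT addr_ge0 // divr_ge0 // ltW.
    split; first by rewrite u'0 /u' ge_min lexx orbT.
    move=> v /andP [v0 vu].
    have [vts|vts] := leP v ts; first by apply: Sts.2; rewrite v0 vts.
    apply: (le_trans (ltW (He v vts _))) => //.
    apply: (le_lt_trans vu); rewrite /u' gt_min; apply/orP; left.
    by rewrite ltrD2l ltr_pdivrMr // ltr_pMr // ltr1n.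
  have := sup_upper_bound hs Su'; rewrite -/ts.
  apply/negP; rewrite -ltNge /u' lt_min tslt andbT ltrDl divr_gt0 //.
split.
  by move=> t ht; apply: Sts.2; rewrite ts_eq.
have hh : forall u, 0 <= u < 1 -> phi u <= c0 by rewrite -ts_eq.
have := @mvt_bound phi dphi (fun u => phi u <= c0) l 1 hd hl ltr01 hh.
by rewrite mul1r expr1n mulr1.
Qed.

End B.

Section C.
Variables (R : realType) (n : nat).
Implicit Types (u v w : 'cV[R]_n).

Lemma dotE u v : dot u v = \sum_i u i 0 * v i 0.
Proof. by rewrite /dot !mxE; apply: eq_bigr => i _; rewrite !mxE. Qed.

Lemma dotC u v : dot u v = dot v u.
Proof. by rewrite !dotE; apply: eq_bigr => i _; rewrite mulrC. Qed.

Lemma dotDl u v w : dot (u + v) w = dot u w + dot v w.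
Proof. by rewrite !dotE -big_split; apply: eq_bigr => i _; rewrite !mxE mulrDl. Qed.

Lemma dotDr u v w : dot w (u + v) = dot w u + dot w v.
Proof. by rewrite dotC dotDl !(dotC w). Qed.

Lemma dotZl (c : R) u v : dot (c *: u) v = c * dot u v.
Proof. by rewrite !dotE mulr_sumr; apply: eq_bigr => i _; rewrite !mxE mulrA. Qed.

Lemma dotZr (c : R) u v : dot u (c *: v) = c * dot u v.
Proof. by rewrite dotC dotZl dotC. Qed.

Lemma dotNl u v : dot (- u) v = - dot u v.
Proof. by rewrite -scaleN1r dotZl mulN1r. Qed.

Lemma dotNr u v : dot u (- v) = - dot u v.
Proof. by rewrite dotC dotNl dotC. Qed.

Lemma dotBl u v w : dot (u - v) w = dot u w - dot v w.
Proof. by rewrite dotDl dotNl. Qed.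

Lemma dotBr u v w : dot w (u - v) = dot w u - dot w v.
Proof. by rewrite dotDr dotNr. Qed.

Lemma dot0r u : dot u 0 = 0.
Proof. by rewrite dotE big1 // => i _; rewrite mxE mulr0. Qed.

Lemma dot0l u : dot 0 u = 0.
Proof. by rewrite dotC dot0r. Qed.

Lemma dot_ge0 u : 0 <= dot u u.
Proof. by rewrite dotE; apply: sumr_ge0 => i _; rewrite -expr2 sqr_ge0. Qed.

Lemma nrm_ge0 u : 0 <= nrm u.
Proof. exact: sqrtr_ge0. Qed.

Lemma nrm_sq u : nrm u ^+ 2 = dot u u.
Proof. by rewrite /nrm sqr_sqrtr // dot_ge0. Qed.

Lemma real_cs (A B C : R) : 0 <= C ->
  (forall t, 0 <= A - 2 * t * B + t ^+ 2 * C) -> B ^+ 2 <= A * C.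
Proof.
move=> Cge H.
have [C0|C0] := eqVneq C 0.
  have [B0|B0] := eqVneq B 0; first by rewrite B0 C0 expr0n /= mulr0.
  have := H ((A + 1) / (2 * B)); rewrite C0 mulr0 addr0.
  have -> : 2 * ((A + 1) / (2 * B)) * B = A + 1 by field; rewrite B0.
  lra.
have Cp : 0 < C by rewrite lt_def C0 Cge.
have := H (B / C).
have -> : A - 2 * (B / C) * B + (B / C) ^+ 2 * C = A - B ^+ 2 / C by field.
rewrite subr_ge0 ler_pdivrMr //.
Qed.

Lemma cs u v : `|dot u v| <= nrm u * nrm v.
Proof.
have h : dot u v ^+ 2 <= dot u u * dot v v.
  apply: real_cs; first exact: dot_ge0.
  move=> t; have := dot_ge0 (u - t *: v).
  rewrite !dotBl !dotBr !dotZl !dotZr (dotC v u); lra.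
rewrite -(ger0_norm (mulr_ge0 (nrm_ge0 u) (nrm_ge0 v))).
rewrite -ler_sqr ?nnegrE ?normr_ge0 //.
by rewrite !real_normK ?num_real // exprMn !nrm_sq.
Qed.

Lemma cs' u v : dot u v <= nrm u * nrm v.
Proof. exact: le_trans (ler_norm _) (cs u v). Qed.

Lemma nrmZ (c : R) u : nrm (c *: u) = `|c| * nrm u.
Proof.
by rewrite /nrm dotZl dotZr mulrA -expr2 sqrtrM ?sqr_ge0 // sqrtr_sqr.
Qed.

Lemma nrmN u : nrm (- u) = nrm u.
Proof. by rewrite -scaleN1r nrmZ normrN normr1 mul1r. Qed.

Lemma nrmD u v : nrm (u + v) <= nrm u + nrm v.
Proof.
rewrite -ler_sqr ?nnegrE ?addr_ge0 ?nrm_ge0 //.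
rewrite nrm_sq dotDl !dotDr sqrrD !nrm_sq (dotC v u).
have := cs' u v; lra.
Qed.

Lemma nrmB u v : nrm (u - v) <= nrm u + nrm v.
Proof. by rewrite -(nrmN v) nrmD. Qed.

Lemma nrm0 : nrm (0 : 'cV[R]_n) = 0.
Proof. by rewrite /nrm dot0r sqrtr0. Qed.

End C.

Section D.
Variables (R : realType) (n : nat).
Implicit Types (u v w g s y : 'cV[R]_n).

Lemma outer_mul y s g : (y *m s^T) *m g = dot s g *: y.
Proof.
rewrite -mulmxA -mul_mx_scalar; congr (_ *m _).
by apply/matrixP => i j; rewrite !ord1 /dot !mxE eqxx mulr1n.
Qed.

Lemma dot_eq0 u : dot u u = 0 -> u = 0.
Proof.
rewrite dotE => H; apply/matrixP => i j; rewrite ord1 mxE.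
have nn : forall k : 'I_n, xpredT k -> 0 <= u k 0 * u k 0.
  by move=> k _; rewrite -expr2 sqr_ge0.
have := @psumr_eq0P R _ xpredT (fun i => u i 0 * u i 0) nn H i isT.
by move/eqP; rewrite mulf_eq0 orbb => /eqP.
Qed.

Lemma pd_unit (B : 'M[R]_n) (m : R) : 0 < m ->
  (forall z, m * nrm z ^+ 2 <= dot z (B *m z)) -> B \in unitmx.
Proof.
move=> m0 H; rewrite unitmxE unitfE; apply/negP => /det0P [v v0 vB].
have := H v^T.
have -> : dot v^T (B *m v^T) = 0.
  by rewrite /dot trmxK mulmxA vB mul0mx mxE.
rewrite nrm_sq => h.
have : dot v^T v^T = 0.
  apply/le_anti; rewrite dot_ge0 andbT.
  by rewrite -(pmulr_rle0 _ m0).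
move/dot_eq0 => /(congr1 trmx); rewrite trmxK trmx0 => vz.
by move: v0; rewrite vz eqxx.
Qed.

Lemma newton_good (B : 'M[R]_n) (m : R) g : 0 < m ->
  (forall z, m * nrm z ^+ 2 <= dot z (B *m z)) -> g != 0 ->
  let d := - (invmx B *m g) in
  0 < - dot g d /\ nrm d ^+ 2 <= m^-1 * (- dot g d).
Proof.
move=> m0 H g0 d.
have Bu := @pd_unit B m m0 H.
have Bd : B *m d = - g by rewrite /d mulmxN mulKVmx.
have e : - dot g d = dot d (B *m d) by rewrite Bd dotNr dotC.
have hd := H d; rewrite -e in hd.
have d0 : d != 0.
  apply/negP => /eqP dz; move: Bd; rewrite dz mulmx0 => /eqP.
  by rewrite eq_sym oppr_eq0 (negbTE g0).
have nd : 0 < nrm d ^+ 2.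
  rewrite nrm_sq lt_def dot_ge0 andbT; apply/negP => /eqP /dot_eq0 dz.
  by move: d0; rewrite dz eqxx.
split; first by apply: lt_le_trans hd; rewrite mulr_gt0.
by rewrite ler_pdivlMl.
Qed.

Lemma Hmat_mul s y g : Hmat s y *m g =
  g - (dot y s)^-1 *: (dot s g *: y + dot y g *: s)
    + (2 * nrm y ^+ 2 / (dot y s) ^+ 2) *: (dot s g *: s).
Proof.
rewrite /Hmat !mulmxDl mul1mx mulNmx -!scalemxAl mulmxDl !outer_mul.
by [].
Qed.


Lemma H_good s y g (th L : R) : 0 < th -> 0 <= L ->
  th * nrm s ^+ 2 < `|dot s y| -> nrm y <= L * nrm s -> g != 0 ->
  let d := - (Hmat s y *m g) in
  0 < - dot g d /\ nrm d ^+ 2 <= 2 * (1 + 2 * L / th + 2 * L ^+ 2 / th ^+ 2) ^+ 2 * (- dot g d).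
Proof.
move=> th0 L0 ha hy g0 d.
set a := dot y s.
have ha' : th * nrm s ^+ 2 < `|a| by rewrite /a dotC.
have ns0 := nrm_ge0 s; have ny0 := nrm_ge0 y; have ng0 := nrm_ge0 g.
have apos : 0 < `|a| by apply: le_lt_trans _ ha'; rewrite mulr_ge0 ?sqr_ge0 // ltW.
have a0 : a != 0 by move: apos; rewrite normr_gt0.
set G := dot g g.
have Gp : 0 < G.
  rewrite lt_def dot_ge0 andbT; apply/negP => /eqP /dot_eq0 gz.
  by move: g0; rewrite gz eqxx.
set sg := dot s g; set yg := dot y g.
have eD : - dot g d = G - 2 * (a^-1 * sg) * yg + 2 * nrm y ^+ 2 * (a^-1 * sg) ^+ 2.
  rewrite /d dotNr opprK Hmat_mul !dotDr !dotNr !dotZr !dotDr !dotZr.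
  rewrite (dotC g y) (dotC g s) -/sg -/yg -/G.
  rewrite -/a; field; exact: a0.
have csy : yg ^+ 2 <= nrm y ^+ 2 * G.
  rewrite /G -nrm_sq -exprMn -[yg ^+ 2]real_normK ?num_real //.
  by rewrite ler_sqr ?nnegrE ?normr_ge0 ?mulr_ge0 // cs.
have lowD : G / 2 <= - dot g d.
  rewrite eD; set z := a^-1 * sg.
  have h1 : 0 <= (nrm y ^+ 2 * G - yg ^+ 2) * z ^+ 2.
    by rewrite mulr_ge0 ?sqr_ge0 // subr_ge0.
  have h2 : 0 <= (G / 2 - z * yg) ^+ 2 by rewrite sqr_ge0.
  have : 0 <= G * (G - 2 * z * yg + 2 * nrm y ^+ 2 * z ^+ 2 - G / 2) by nra.
  rewrite pmulr_rge0 // subr_ge0 //.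
split; first by apply: lt_le_trans lowD; rewrite divr_gt0.
set K := 1 + 2 * L / th + 2 * L ^+ 2 / th ^+ 2.
have nb : nrm d <= K * nrm g.
  set b := 2 * nrm y ^+ 2 / a ^+ 2.
  have e1 : nrm d <= nrm g + `|a^-1| * (`|sg| * nrm y + `|yg| * nrm s) + `|b| * (`|sg| * nrm s).
    rewrite /d nrmN Hmat_mul -/a -/sg -/yg -/b.
    apply: le_trans (nrmD _ _) _; rewrite nrmZ nrmZ; apply: lerD => //.
    apply: le_trans (nrmB _ _) _; rewrite nrmZ; apply: lerD => //.
    apply: ler_wpM2l => //; apply: le_trans (nrmD _ _) _; rewrite !nrmZ //.
  have csg : `|sg| <= nrm s * nrm g by exact: cs.
  have cyg : `|yg| <= nrm y * nrm g by exact: cs.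
  set P := `|a|^-1 * nrm s ^+ 2.
  have P0 : 0 <= P by rewrite mulr_ge0 ?sqr_ge0 // invr_ge0 ltW.
  have Pth : P <= th^-1.
    have e : P = nrm s ^+ 2 / `|a| by rewrite /P mulrC.
    rewrite e ler_pdivrMr //.
    rewrite -{1}(mulKf (lt0r_neq0 th0) (nrm s ^+ 2)).
    by apply: ler_wpM2l; [rewrite invr_ge0 ltW | exact: ltW].
  have ia0 : 0 <= `|a|^-1 by rewrite invr_ge0 ltW.
  have t2 : `|a^-1| * (`|sg| * nrm y + `|yg| * nrm s) <= 2 * L / th * nrm g.
    rewrite normfV.
    have h1 : `|sg| * nrm y + `|yg| * nrm s <= 2 * L * nrm s ^+ 2 * nrm g.
      have h2 : `|sg| * nrm y <= nrm s * nrm g * (L * nrm s).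
        by apply: ler_pM => //; rewrite normr_ge0.
      have h3 : `|yg| * nrm s <= (L * nrm s) * nrm g * nrm s.
        apply: ler_wpM2r => //; apply: (le_trans cyg); exact: ler_wpM2r.
      move: h2 h3; rewrite expr2; lra.
    apply: le_trans (ler_wpM2l ia0 h1) _.
    have : `|a|^-1 * (2 * L * nrm s ^+ 2 * nrm g) = 2 * L * nrm g * P by rewrite /P; ring.
    move=> ->; rewrite (_ : 2 * L / th * nrm g = 2 * L * nrm g * th^-1); last by ring.
    by apply: ler_wpM2l => //; rewrite !mulr_ge0.
  have t3 : `|b| * (`|sg| * nrm s) <= 2 * L ^+ 2 / th ^+ 2 * nrm g.
    have b0 : 0 <= b by rewrite /b; apply: divr_ge0; [apply: mulr_ge0; [lra | exact: sqr_ge0] | exact: sqr_ge0].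
    rewrite ger0_norm // /b.
    have h1 : `|sg| * nrm s <= nrm s ^+ 2 * nrm g.
      by rewrite expr2 -mulrA mulrC mulrA -mulrA ler_wpM2l.
    have h4 : nrm y ^+ 2 <= L ^+ 2 * nrm s ^+ 2.
      by rewrite -exprMn ler_sqr ?nnegrE ?mulr_ge0.
    have ea : 2 * nrm y ^+ 2 / a ^+ 2 = 2 * nrm y ^+ 2 * `|a|^-1 ^+ 2.
      by rewrite -normfV -[a^-1]/(a^-1) real_normK ?num_real // exprVn.
    rewrite ea.
    apply: (le_trans (y := 2 * (L ^+ 2 * nrm s ^+ 2) * `|a|^-1 ^+ 2 * (nrm s ^+ 2 * nrm g))).
      apply: ler_pM => //; first by rewrite !mulr_ge0 ?sqr_ge0.
        by rewrite mulr_ge0 ?normr_ge0.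
      apply: ler_wpM2r; first by rewrite sqr_ge0.
      by apply: ler_wpM2l.
    have -> : 2 * (L ^+ 2 * nrm s ^+ 2) * `|a|^-1 ^+ 2 * (nrm s ^+ 2 * nrm g) = 2 * L ^+ 2 * nrm g * P ^+ 2.
      by rewrite /P; ring.
    rewrite (_ : 2 * L ^+ 2 / th ^+ 2 * nrm g = 2 * L ^+ 2 * nrm g * th^-1 ^+ 2); last first.
      by rewrite exprVn; ring.
    apply: ler_wpM2l; first by rewrite !mulr_ge0 ?sqr_ge0.
    have thi : 0 <= th^-1 by rewrite invr_ge0 ltW.
    by rewrite ler_sqr ?nnegrE.
  move: e1 t2 t3; rewrite /K; nra.
have K0 : 0 <= K by rewrite /K !addr_ge0 ?ler01 // ?divr_ge0 ?mulr_ge0 ?sqr_ge0 // ltW.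
apply: (le_trans (y := K ^+ 2 * G)).
  rewrite /G -nrm_sq -exprMn ler_sqr ?nnegrE ?mulr_ge0 ?nrm_ge0 //.
have h : 0 <= K ^+ 2 * (2 * (- dot g d) - G) by rewrite mulr_ge0 ?sqr_ge0 // subr_ge0; lra.
nra.
Qed.
End D.

Section E.
Variables (R : realType) (n : nat).

Lemma D_dot (f : 'cV[R]_n -> R) x v : differentiable f x ->
  'D_v f x = dot (grad f x) v.
Proof.
move=> df; rewrite deriveE // dotE.
rewrite {1}(matrix_sum_delta v) linear_sum /=.
apply: eq_bigr => i _; rewrite big_ord1 linearZ /= /grad mxE deriveE //.
by rewrite mulrC.
Qed.

Lemma phi_derive (f : 'cV[R]_n -> R) x s (t : R) : differentiable f (x + t *: s) ->
  is_derive t 1 (fun u : R => f (x + u *: s)) (dot (grad f (x + t *: s)) s).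
Proof.
move=> df.
have E : (fun h : R => h^-1 *: (((fun u : R => f (x + u *: s)) \o shift t) (h *: 1) - f (x + t *: s)))
   = (fun h : R => h^-1 *: ((f \o shift (x + t *: s)) (h *: s) - f (x + t *: s))).
  apply: funext => h /=; congr (_ *: (f _ - _)).
  rewrite /shift /= scalerDl (_ : h%:A = h); last by rewrite /GRing.scale /= mulr1.
  by rewrite addrCA.
split; first by rewrite /derivable E; apply: diff_derivable.
by rewrite /derive E -D_dot.
Qed.
End E.

Section F.
Variable R : realType.

Lemma rho_lemma (dt q e A : R) : 0 < dt -> dt * (4 + 8 * A) <= 1 -> 0 <= A -> 0 < q ->
  `|e| <= A * (dt / (1 + dt)) * q ->
  `|1 - (q - e) / ((1 + dt / 2) / (1 + dt) * q)| < 3 / 4.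
Proof.
move=> dt0 hdt A0 q0 he.
set c := dt / (1 + dt).
have dt1 : 0 < 1 + dt by lra.
have c0 : 0 < c by rewrite divr_gt0.
have cdt : c <= dt by rewrite ler_pdivrMr // ler_peMr //; lra.
have eb : (1 + dt / 2) / (1 + dt) = 1 - c / 2.
  by rewrite /c; field; rewrite gt_eqF.
rewrite eb.
have c1 : c < 1 by rewrite /c ltr_pdivrMr //; lra.
have md0 : 0 < (1 - c / 2) * q by rewrite mulr_gt0 //; lra.
have -> : 1 - (q - e) / ((1 - c / 2) * q) = (e - c / 2 * q) / ((1 - c / 2) * q).
  by field; rewrite gt_eqF // gt_eqF //; lra.
rewrite normrM normfV (gtr0_norm md0) ltr_pdivrMr //.
have h1 : `|e - c / 2 * q| <= `|e| + c / 2 * q.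
  have cq0 : 0 <= c / 2 * q by rewrite mulr_ge0 ?divr_ge0 ?ltW.
  by apply: le_trans (ler_normB _ _) _; rewrite (ger0_norm cq0).
have h2 : A * c <= A * dt by rewrite ler_wpM2l.
have h3 : A * c * q <= A * dt * q by rewrite ler_wpM2r // ltW.
have h4 : c * q <= dt * q by rewrite ler_wpM2r // ltW.
have h5 : dt * q * (4 + 8 * A) <= q by rewrite mulrAC ger_pMl //; lra.
have hq : dt * q <= q / 4 by nra.
move: h1 h3 h4 h5 hq he; rewrite -/c; lra.
Qed.
End F.

Unset Implicit Arguments.

Theorem lemma3 (R : realType) (n : nat) (f : 'cV[R]_n -> R) (x0 : 'cV[R]_n)
    (L_C m M eps : R) :
  C2 f ->
  (forall x y : 'cV[R]_n, f x <= f x0 -> f y <= f x0 ->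
     nrm (grad f x - grad f y) <= L_C * nrm (x - y)) ->
  0 < m -> m <= M ->
  (forall x z : 'cV[R]_n, f x <= f x0 ->
     m * nrm z ^+ 2 <= dot z (hess f x *m z) <= M * nrm z ^+ 2) ->
  (* the stopping test ||g_k|| <= eps is never triggered *)
  0 < eps -> (forall k, eps < nrm (grad f (xk f x0 k))) ->
  exists delta : R, 0 < delta /\
    forall k : nat, (1 <= k)%N -> gamma_2 R * delta <= dtk f x0 k.
Proof.
move=> [df [_ _]] Lip m0 mM hH eps0 hg.
set L := `|L_C|.
have L0 : 0 <= L by exact: normr_ge0.
have Lip' : forall x y, f x <= f x0 -> f y <= f x0 ->
    nrm (grad f x - grad f y) <= L * nrm (x - y).
  move=> x y hx hy; apply: le_trans (Lip x y hx hy) _.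
  by apply: ler_wpM2r; [exact: nrm_ge0 | exact: ler_norm].
set th := theta R.
have th0 : 0 < th by rewrite /th /theta invr_gt0 exprn_gt0.
set KH := 1 + 2 * L / th + 2 * L ^+ 2 / th ^+ 2.
set Kd := m^-1 + 2 * KH ^+ 2.
have Kd0 : 0 <= Kd.
  have := sqr_ge0 KH; have : 0 <= m^-1 by rewrite invr_ge0 ltW.
  rewrite /Kd; lra.
set A := L * Kd.
have A0 : 0 <= A by rewrite mulr_ge0.
set del := Num.min ((4 + 8 * A)^-1) (dt0 R).
have del0 : 0 < del.
  rewrite /del lt_min invr_gt0 /dt0 invr_gt0 exprn_gt0 // andbT.
  lra.
pose good x d := 0 < - dot (grad f x) d /\ nrm d ^+ 2 <= Kd * (- dot (grad f x) d).
pose Inv (st : state R n) := [/\ f (st_x st) <= f x0, 0 < st_dt st,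
   nrm (st_y st) <= L * nrm (st_s st), (st_acc st = false -> good (st_x st) (st_dir st))
   & gamma_2 R * del <= st_dt st].
have step_inv : forall st, Inv st -> grad f (st_x st) != 0 -> Inv (step f st).
  move=> [x dt kb dir0 s0 y0 acc] [/= Ix Idt Iy Idir Ilow] g0.
  rewrite /step /=.
  set g := grad f x.
  set d := (if acc then _ else dir0).
  have dE : d = (if acc then (if (theta R * nrm s0 ^+ 2 < `|dot s0 y0|) && (kb < 5)%N
       then - (Hmat s0 y0 *m g) else - (invmx (hess f x) *m g)) else dir0) by [].
  clearbody d.
  have Hx : forall z, m * nrm z ^+ 2 <= dot z (hess f x *m z).
    by move=> z; case/andP: (hH x z Ix).
  have gd : good x d.
    rewrite dE; case: acc Idir {dE} => [_|]; last by move=> /(_ erefl).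
    case: ifP => [/andP [hc _]|_].
      have [h1 h2] := @H_good R n s0 y0 g th L th0 L0 hc Iy g0.
      split => //; apply: le_trans h2 _; apply: ler_wpM2r; first exact: ltW.
      by rewrite /Kd /KH lerDr invr_ge0 ltW.
    have [h1 h2] := @newton_good R n (hess f x) m g m0 Hx g0.
    split => //; apply: le_trans h2 _; apply: ler_wpM2r; first exact: ltW.
    by rewrite /Kd lerDl mulr_ge0 ?sqr_ge0.
  case: gd => Dpos Dbd.
  set D := - dot g d.
  set c := dt / (1 + dt).
  have c0 : 0 < c by rewrite divr_gt0 //; lra.
  have cdt : c <= dt by rewrite ler_pdivrMr ?ler_peMr //; lra.
  set s := c *: d.
  have gs : dot g s = - (c * D) by rewrite /s dotZr /D mulrN opprK.
  have md : (1 + dt / 2) / (1 + dt) * dot g 0 - (1 + dt / 2) / (1 + dt) * dot g s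
      = (1 + dt / 2) / (1 + dt) * (c * D).
    by rewrite dot0r gs; ring.
  rewrite md.
  set rho := (f x - f (x + s)) / _.
  have q0 : 0 < c * D by rewrite mulr_gt0.
  have beta0 : 0 < (1 + dt / 2) / (1 + dt) by rewrite divr_gt0 //; lra.
  have acc_dec : eta_a R < rho -> f (x + s) < f x.
    move=> h; have : 0 < rho by apply: lt_trans h; rewrite /eta_a invr_gt0 exprn_gt0.
    have mdp : 0 < (1 + dt / 2) / (1 + dt) * (c * D) by rewrite mulr_gt0.
    rewrite /rho pmulr_lgt0 ?invr_gt0 // => h1. by rewrite -subr_gt0.
  have small : dt <= del -> `|1 - rho| < eta_2 R.
    move=> hdel.
    have hdA : dt * (4 + 8 * A) <= 1.
      have : dt <= (4 + 8 * A)^-1 by apply: le_trans hdel _; rewrite /del ge_min lexx.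
      by rewrite -ler_pdivlMr ?mul1r //; lra.
    pose phi := fun u : R => f (x + u *: s).
    pose dphi := fun u : R => dot (grad f (x + u *: s)) s.
    have hd : forall u : R, is_derive u 1 phi (dphi u) by move=> u; apply: phi_derive.
    set l := L * nrm s ^+ 2.
    have ns : nrm s = c * nrm d by rewrite /s nrmZ gtr0_norm.
    have lb : l <= A * c * (c * D).
      rewrite /l ns exprMn /A.
      have := ler_wpM2l (mulr_ge0 L0 (sqr_ge0 c)) Dbd.
      move=> h; rewrite (_ : L * (c ^+ 2 * nrm d ^+ 2) = L * c ^+ 2 * nrm d ^+ 2); last by ring.
      apply: le_trans h _; rewrite le_eqVlt; apply/orP; left; apply/eqP; rewrite /D; ring.
    have lq : l <= (c * D) / 2.
      apply: le_trans lb _.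
      have Ac : A * c <= 1 / 8.
        have := ler_wpM2l A0 cdt; nra.
      have := ler_wpM2r (ltW q0) Ac; lra.
    have hl : forall u, 0 <= u -> phi u <= f x0 -> `|dphi u - dphi 0| <= l * u.
      move=> u u0 hu; rewrite /dphi scale0r addr0 -dotBl.
      apply: le_trans (cs _ _) _.
      apply: le_trans (ler_wpM2r (nrm_ge0 _) (Lip' _ _ hu Ix)) _.
      rewrite addrAC subrr add0r nrmZ ger0_norm // /l; rewrite le_eqVlt; apply/orP; left; apply/eqP; ring.
    have phi0 : phi 0 = f x by rewrite /phi scale0r addr0.
    have dphi0 : dphi 0 = - (c * D) by rewrite /dphi scale0r addr0 gs.
    have l0 : 0 <= l by rewrite /l mulr_ge0 ?sqr_ge0.
    have p0 : phi 0 <= f x0 by rewrite phi0.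
    have [_ hseg] := @segment R phi dphi (f x0) (c * D) l hd p0 q0 dphi0 l0 lq hl.
    move: hseg; rewrite phi0 dphi0 /phi scale1r => hseg.
    rewrite /rho (_ : f x - f (x + s) = c * D - (f (x + s) - f x - - (c * D))); last by ring.
    rewrite /eta_2; apply: (@rho_lemma R dt (c * D) _ A) => //.
    exact: le_trans hseg lb.
  rewrite /Inv /=.
  set dt' := (if eta_2 R <= `|1 - rho| then _ else _).
  have [Hdt1 Hdt2] : 0 < dt' /\ gamma_2 R * del <= dt'.
    have g2 : gamma_2 R * del <= gamma_2 R * dt -> gamma_2 R * del <= dt.
      by rewrite /gamma_2; lra.
    rewrite /dt' /gamma_2 /gamma_1; have [hd|hd] := leP dt del.
      rewrite leNgt (small hd) /=; case: ifP => _; move: Ilow; rewrite /gamma_2; lra.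
    have : del <= dt by exact: ltW.
    case: ifP => _; [|case: ifP => _]; move: Ilow; rewrite /gamma_2; lra.
  have [hacc|hacc] := boolP (eta_a R < rho).
    have fdec := acc_dec hacc.
    have fxs : f (x + s) <= f x0 by apply: le_trans (ltW fdec) Ix.
    split => //.
    apply: le_trans (Lip' _ _ fxs Ix) _.
    by rewrite addrAC subrr add0r.
  split => //.
have inv_all : forall k, Inv (eptctr f x0 k).
  elim => [|k IH].
    split => //=; rewrite ?nrm0 ?mulr0 //.
      by rewrite /dt0 invr_gt0 exprn_gt0.
    have : del <= dt0 R by rewrite /del ge_min lexx orbT.
    rewrite /gamma_2; lra.
  apply: step_inv IH _.
  apply/negP => /eqP gz; have := hg k; rewrite /xk gz nrm0.
  by rewrite ltNge (ltW eps0).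
exists del; split => // k _; by have [] := inv_all k.
Qed.
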